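(* Let $n\ge 1$, $d_1,\dots,d_n\ge 1$, $L_i\in\mathbb{C}^{d_i\times d_i}$ ($i=1,\dots,n$) and $C_{i,i-1}\in\mathbb{C}^{d_i\times d_{i-1}}$ ($i=2,\dots,n$). Assume: (i) each $L_i$ is invertible and diagonalizable, $L_iV_i=V_i\Lambda_i$ with $V_i$ invertible and $\Lambda_i=\mathrm{diag}(\lambda_{i,1},\dots,\lambda_{i,d_i})$; (ii) $\sigma(L_i)\cap\sigma(L_j)=\emptyset$ for all $i\neq j$; (iii) $\|L_1\|<\|L_2\|<\cdots<\|L_n\|\le 1$. Let $\mathsf{NonLin}(x_1,\dots,x_n)=(L_1x_1+N_1(x_1),\;L_2x_2+C_{2,1}x_1+N_2(x_1,x_2),\;\dots,\;L_nx_n+C_{n,n-1}x_{n-1}+N_n(x_{n-1},x_n))$ for some maps $N_1:\mathbb{C}^{d_1}\to\mathbb{C}^{d_1}$, $N_i:\mathbb{C}^{d_{i-1}}\times\mathbb{C}^{d_i}\to\mathbb{C}^{d_i}$, and let $\tau$ be a homeomorphism of $\mathbb{C}^{d_1}\times\cdots\times\mathbb{C}^{d_n}$ with $\mathsf{Lin}=\tau^{-1}\circ\mathsf{NonLin}\circ\tau$. Then for every $i\in\{1,\dots,n\}$, $s_i\in\{1,\dots,d_i\}$ and $y\in\mathbb{C}^{d_1}\times\cdots\times\mathbb{C}^{d_n}$, $$\lim_{t\to\infty}\frac{\Big|(\Psi_{i,s_i}\circ\tau^{-1})\big(\mathsf{NonLin}^{\circ t}(y)\big)-(\Psi_{i,s_i}\circ\tau^{-1})\Big((\tau\circ\mathsf{Nom}\circ\tau^{-1})^{\circ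 t}\big((\tau\circ\mathsf{pert}\circ\tau^{-1})(y)\big)\Big)\Big|}{\|L_i\|^t}=0,$$ i.e. $|\mathcal U_{\mathsf{NonLin}}^{\circ t}(\Psi_{i,s_i}\circ\tau^{-1})(y)-\mathcal U_{\tau\circ\mathsf{Nom}\circ\tau^{-1}}^{\circ t}(\Psi_{i,s_i}\circ\tau^{-1})((\tau\circ\mathsf{pert}\circ\tau^{-1})(y))|/\|L_i\|^t\to 0$, where $\mathcal U_F f=f\circ F$.
   Context: Each $\mathbb{C}^{d_i}$ carries a fixed norm, matrices carry the induced operator norm. $\mathsf{Lin}(x_1,\dots,x_n)=(L_1x_1,\;L_2x_2+C_{2,1}x_1,\;\dots,\;L_nx_n+C_{n,n-1}x_{n-1})$, $\mathsf{Nom}(x_1,\dots,x_n)=(L_1x_1,\dots,L_nx_n)$, $\mathsf{F}^{\circ t}$ is the $t$-fold iterate. $\psi_{i,s}(x_i)=\hat e_s^{*}V_i^{-1}x_i$ ($\hat e_s$ the $s$-th standard basis vector of $\mathbb{C}^{d_i}$) and $\Psi_{i,s}(x_1,\dots,x_n)=\psi_{i,s}(x_i)$. Matrices $D_{i,j}$ ($1\le j\le i\le n$) are defined recursively in $i$: $D_{i,i}=I_{d_i}$; for $i\ge 2$, $1\le j\le i-1$, $[\tilde C_{i,j}]_{\ell,m}=[V_i^{-1}C_{i,i-1}D_{i-1,j}V_j]_{\ell,m}(1-\lambda_{j,m}/\lambda_{i,\ell})^{-1}$ and $D_{i,j}=L_i^{-1}V_i\tilde C_{i,j}V_j^{-1}$.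 Define $\mathsf{pert}_1(x_1)=x_1$, $\mathsf{pert}_i(x_1,\dots,x_i)=x_i+\sum_{j=1}^{i-1}(-1)^{i-1-j}D_{i,j}\mathsf{pert}_j(x_1,\dots,x_j)$ for $i\ge2$, and $\mathsf{pert}(x)=(\mathsf{pert}_1(x_1),\dots,\mathsf{pert}_n(x_1,\dots,x_n))$. *)

(* Defs.v *)
From mathcomp Require Import all_boot all_algebra.
From mathcomp Require Import all_classical all_reals all_analysis.
From mathcomp Require Import complex.
Import GRing.Theory Num.Theory numFieldNormedType.Exports.
Set Implicit Arguments. Unset Strict Implicit. Unset Printing Implicit Defensive.
Local Open Scope ring_scope.
Local Open Scope classical_set_scope.

Section Defs.
Variable R : realType.
Local Notation C := R[i].

Definition cabs (z : C) : R := ComplexField.Normc.normc z.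

Definition is_norm (d : nat) (nrm : 'cV[C]_d -> R) : Prop :=
  [/\ forall x, 0 <= nrm x,
      forall x, nrm x = 0 -> x = 0,
      forall (a : C) x, nrm (a *: x) = cabs a * nrm x &
      forall x y, nrm (x + y) <= nrm x + nrm y].

Definition opnorm (d : nat) (nrm : 'cV[C]_d -> R) (A : 'M[C]_d) : R :=
  sup [set r | exists x : 'cV[C]_d, x != 0 /\ r = nrm (A *m x) / nrm x].

Variable n : nat.
Variable d : 'I_n -> nat.

(* index i-1 (0-based: predecessor, with predix 0 = 0, never used at 0) *)
Definition predix (i : 'I_n) : 'I_n :=
  Ordinal (leq_ltn_trans (leq_pred i) (ltn_ord i)).

(* state space C^{d_1} x ... x C^{d_n} (blocks indexed 0..n-1) *)
Definition state := forall i : 'I_n, 'cV[C]_(d i).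

Definition state_norm (nrm : forall i : 'I_n, 'cV[C]_(d i) -> R) (x : state) : R :=
  \big[Num.max/0]_(i < n) nrm i (x i).

Definition state_sub (x y : state) : state := fun i => x i - y i.

Definition state_continuous (nrm : forall i : 'I_n, 'cV[C]_(d i) -> R)
  (f : state -> state) : Prop :=
  forall (x : state) (eps : R), 0 < eps -> exists2 delta : R, 0 < delta &
    forall z : state, state_norm nrm (state_sub z x) < delta ->
      state_norm nrm (state_sub (f z) (f x)) < eps.

Definition is_homeomorphism (nrm : forall i : 'I_n, 'cV[C]_(d i) -> R)
  (tau tauinv : state -> state) : Prop :=
  [/\ cancel tau tauinv, cancel tauinv tau,
      state_continuous nrm tau & state_continuous nrm tauinv].

Variable L : forall i : 'I_n, 'M[C]_(d i).
Variable Cm : forall i : 'I_n, 'M[C]_(d i, d (predix i)).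
Variable V : forall i : 'I_n, 'M[C]_(d i).
Variable lam : forall i : 'I_n, 'I_(d i) -> C.

Definition Lin (x : state) : state := fun i =>
  L i *m x i + (if (i : nat) == 0%N then 0 else Cm i *m x (predix i)).

Definition Nom (x : state) : state := fun i => L i *m x i.

(* N i (x_{i-1}) (x_i); for the first block (i = 0) the first argument is
   x (predix 0) = x 0, so N 0 is a function of x_1 alone, as in the paper *)
Definition NonLin (N : forall i : 'I_n, 'cV[C]_(d (predix i)) -> 'cV[C]_(d i) -> 'cV[C]_(d i))
  (x : state) : state := fun i =>
  L i *m x i + (if (i : nat) == 0%N then 0 else Cm i *m x (predix i))
    + N i (x (predix i)) (x i).

Definition Psi (i : 'I_n) (s : 'I_(d i)) (x : state) : C :=
  (invmx (V i) *m x i) s 0.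

Definition idlike (i j : 'I_n) : 'M[C]_(d i, d j) :=
  \matrix_(a, b) ((a : nat) == b)%:R.

Fixpoint Dfuel (k : nat) (i j : 'I_n) {struct k} : 'M[C]_(d i, d j) :=
  match k with
  | 0%N => idlike i j
  | k'.+1 =>
      if (j < i)%N then
        let M := invmx (V i) *m Cm i *m Dfuel k' (predix i) j *m V j in
        let Ct := \matrix_(l, m) (M l m * (1 - @lam j m / @lam i l)^-1) in
        invmx (L i) *m V i *m Ct *m invmx (V j)
      else idlike i j
  end.

Definition D (i j : 'I_n) : 'M[C]_(d i, d j) := Dfuel i i j.

Fixpoint pertfuel (k : nat) (x : state) (i : 'I_n) {struct k} : 'cV[C]_(d i) :=
  match k with
  | 0%N => x i
  | k'.+1 => x i + \sum_(j < n | (j < i)%N)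
                     (-1) ^+ (i.-1 - j) *: (D i j *m pertfuel k' x j)
  end.

Definition pert (x : state) : state := fun i => pertfuel i x i.

End Defs.

(* Main.v *)
Require Import Defs.
From mathcomp Require Import all_boot all_algebra.
From mathcomp Require Import all_classical all_reals all_analysis.
From mathcomp Require Import complex.
From mathcomp.algebra_tactics Require Import ring.
From mathcomp Require Import zify.
Import order.Order.TTheory GRing.Theory Num.Theory numFieldNormedType.Exports.
Local Open Scope ring_scope.
Local Open Scope classical_set_scope.
Unset Printing Implicit Defensive.


Section Cabs.
Variable R : realType.
Local Notation C := (complex R).

Lemma cabs_ge0 (z : C) : 0 <= cabs z.
Proof. by case: z => a b; rewrite /cabs /= sqrtr_ge0. Qed.

Lemma cabs0 : cabs (0 : C) = 0.
Proof. exact: ComplexField.Normc.normc0. Qed.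

Lemma cabsM (x y : C) : cabs (x * y) = cabs x * cabs y.
Proof. exact: ComplexField.Normc.normcM. Qed.

Lemma cabsD (x y : C) : cabs (x + y) <= cabs x + cabs y.
Proof. exact: (@le_normcD R x y). Qed.

Lemma cabsN (x : C) : cabs (- x) = cabs x.
Proof. exact: (@normcN R x). Qed.

Lemma cabs_eq0 (x : C) : cabs x = 0 -> x = 0.
Proof. exact: ComplexField.Normc.eq0_normc. Qed.

Lemma cabs_cplx (a b : R) : cabs (a +i* b)%C = Num.sqrt (a ^+ 2 + b ^+ 2).
Proof. by []. Qed.

Lemma cabs_real (r : R) : cabs (r%:C)%C = `|r|.
Proof.
rewrite (_ : (r%:C)%C = (r +i* 0)%C) // cabs_cplx expr0n addr0.
exact: sqrtr_sqr.
Qed.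
Lemma cabs_le (a b : R) : cabs (a +i* b)%C <= `|a| + `|b|.
Proof.
rewrite cabs_cplx -[X in _ <= X]ger0_norm ?addr_ge0 // -sqrtr_sqr.
apply: ler_wsqrtr.
rewrite sqrrD -(real_normK (num_real a)) -(real_normK (num_real b)).
rewrite -addrA lerD2l.
by rewrite -subr_ge0 addrK mulrn_wge0 // mulr_ge0.
Qed.
End Cabs.

Section Norm.
Variable R : realType.
Local Notation C := (complex R).
Variable d : nat.
Variable nrm : 'cV[C]_d -> R.
Hypothesis Hn : is_norm nrm.

Lemma nrm_ge0 x : 0 <= nrm x. Proof. by case: Hn. Qed.
Lemma nrm_eq0 x : nrm x = 0 -> x = 0. Proof. by case: Hn => _ H _ _; exact: H. Qed.
Lemma nrmZ a x : nrm (a *: x) = cabs a * nrm x. Proof. by case: Hn => _ _ H _; exact: H. Qed.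
Lemma nrmD x y : nrm (x + y) <= nrm x + nrm y. Proof. by case: Hn => _ _ _ H; exact: H. Qed.

Lemma nrm0 : nrm 0 = 0.
Proof. by have := nrmZ 0 0; rewrite scale0r cabs0 mul0r. Qed.

Lemma nrmN x : nrm (- x) = nrm x.
Proof.
have := nrmZ (-1) x; rewrite scaleN1r cabsN.
by rewrite (_ : cabs 1 = 1) ?mul1r //; exact: ComplexField.Normc.normc1.
Qed.

Lemma nrmB x y : nrm x - nrm y <= nrm (x - y).
Proof. by rewrite lerBlDr (le_trans _ (nrmD _ _)) // subrK. Qed.

Lemma nrm_dist x y : `|nrm x - nrm y| <= nrm (x - y).
Proof.
rewrite ler_norml nrmB andbT lerNl opprB.
by rewrite (le_trans (nrmB _ _)) // -opprB nrmN.
Qed.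

Lemma nrm_sum (I : finType) (P : pred I) (F : I -> 'cV[C]_d) :
  nrm (\sum_(k | P k) F k) <= \sum_(k | P k) nrm (F k).
Proof.
apply: (big_ind2 (fun a b => nrm a <= b)); first by rewrite nrm0.
  by move=> a a' b b' h1 h2; rewrite (le_trans (nrmD _ _)) // lerD.
by [].
Qed.

Definition Kn := \sum_(k < d) nrm (delta_mx k 0).

Lemma nrm_upper x : nrm x <= \sum_(k < d) cabs (x k 0) * nrm (delta_mx k 0).
Proof.
rewrite {1}(matrix_sum_delta x).
rewrite (le_trans (nrm_sum _ _ _)) //; apply: ler_sum => k _.
by rewrite big_ord1 nrmZ.
Qed.

Definition phi (u : 'rV[R]_(d + d)) : 'cV[C]_d :=
  \col_k ((lsubmx u) 0 k +i* (rsubmx u) 0 k)%C.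
Definition psi (x : 'cV[C]_d) : 'rV[R]_(d + d) :=
  row_mx (\row_k complex.Re (x k 0)) (\row_k complex.Im (x k 0)).

Lemma phi_psi x : phi (psi x) = x.
Proof.
apply/matrixP => k j; rewrite mxE /psi row_mxKl row_mxKr !mxE.
by rewrite (ord1 j); case: (x k 0).
Qed.

Lemma psi_phi u : psi (phi u) = u.
Proof.
rewrite /psi -[RHS]hsubmxK; congr row_mx; apply/matrixP => i j;
  by rewrite !mxE (ord1 i).
Qed.

Lemma phiB u v : phi (u - v) = phi u - phi v.
Proof. by apply/matrixP => k j; rewrite !mxE. Qed.

Lemma phiZ (r : R) u : phi (r *: u) = (r%:C)%C *: phi u.
Proof.
apply/matrixP => k j; rewrite !mxE /=.
apply/eqP; rewrite eq_complex /= !mul0r subr0 addr0 !eqxx //.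
Qed.

Lemma entry_le_norm (u : 'rV[R]_(d + d)) j : `|u 0 j| <= `|u|.
Proof.
rewrite [X in _ <= X]/Num.norm /= mx_normrE.
exact: (order.Order.TotalTheory.le_bigmax _ (fun ij : 'I_1 * 'I_(d + d) => `|u ij.1 ij.2|) (0, j)).
Qed.

Lemma cabs_phi_le u k : cabs (phi u k 0) <= 2 * `|u|.
Proof.
rewrite mxE (le_trans (cabs_le _ _ _)) // mulr2n mulrDl mul1r.
by rewrite lerD // mxE entry_le_norm.
Qed.

Lemma nrm_phi_le u : nrm (phi u) <= 2 * Kn * `|u|.
Proof.
rewrite (le_trans (nrm_upper _)) // /Kn mulr_sumr mulr_suml ler_sum // => k _.
by rewrite mulrAC ler_wpM2r ?nrm_ge0 // cabs_phi_le.
Qed.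

Lemma phi0 : phi 0 = 0.
Proof. by rewrite -(subrr 0) phiB subrr. Qed.

Lemma Kn_ge0 : 0 <= Kn.
Proof. by rewrite /Kn sumr_ge0 // => k _; rewrite nrm_ge0. Qed.

Definition gfun (u : 'rV[R]_(d + d)) : R := nrm (phi u).

Lemma gfun_lip x y : `|gfun x - gfun y| <= (2 * Kn + 1) * `|x - y|.
Proof.
rewrite (le_trans (nrm_dist _ _)) // -phiB (le_trans (nrm_phi_le _)) //.
by rewrite ler_wpM2r // lerDl.
Qed.

Lemma gfun_cont : continuous gfun.
Proof.
have K0 : 0 < 2 * Kn + 1 by rewrite ltr_wpDl // mulr_ge0 // Kn_ge0.
move=> x; apply/(cvgrPdist_lt (FF := nbhs_filter x)) => e e0.
suff H : \forall t \near x, `|gfun x - gfun t| < e by exact: H.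
apply/nbhs_normP; exists (e / (2 * Kn + 1)); first by rewrite /= divr_gt0.
move=> z /= xz.
rewrite (le_lt_trans (gfun_lip _ _)) //.
by rewrite mulrC -ltr_pdivlMr.
Qed.

Lemma norm_lower : exists2 c : R, 0 < c & forall (x : 'cV[C]_d) (k : 'I_d), cabs (x k 0) <= c * nrm x.
Proof.
case: (posnP d) => [d0|d0].
  by exists 1 => // x k; have := ltn_ord k; rewrite {2}d0.
pose A := [set u : 'rV[R]_(d + d) | `|u| = 1].
have nzA : forall u : 'rV[R]_(d + d), u != 0 -> A (`|u|^-1 *: u).
  by move=> u u0; rewrite /A /= normrZ ger0_norm ?invr_ge0 // mulVf ?normr_eq0.
have A0 : A !=set0.
  pose u1 : 'rV[R]_(d + d) := const_mx 1.
  exists (`|u1|^-1 *: u1); apply: nzA.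
  apply/eqP => /matrixP /(_ 0 (lshift d (Ordinal d0))); rewrite !mxE => /eqP.
  by rewrite oner_eq0.
have cA : compact A.
  apply: bounded_closed_compact.
    exists 1; split; first exact: num_real.
    by move=> M M1 u Au; rewrite /= Au ltW.
  exact: ((continuous_closedP _).1 (@norm_continuous _ _) _ (@closed_eq _ 1)).
have [c cA' cmin] := compact_EVT_min A0 cA (continuous_subspaceT gfun_cont).
have cAc : A c by move: cA'; rewrite inE.
have m0 : 0 < gfun c.
  rewrite lt_def nrm_ge0 andbT; apply/eqP => /nrm_eq0 Hc.
  have c0 : c = 0 by rewrite -(psi_phi c) Hc -phi0 psi_phi.
  by move: cAc; rewrite /A /= c0 normr0 => /esym/eqP; rewrite oner_eq0.
exists (2 / gfun c); first by rewrite divr_gt0.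
move=> x k.
have [->|x0] := eqVneq x 0.
  by rewrite mxE cabs0 nrm0 mulr0.
pose u := psi x.
have u0 : u != 0.
  by apply: contra x0 => /eqP u0; rewrite -(phi_psi x) -/u u0 phi0.
have Hv := cmin _ (mem_set (nzA _ u0)).
have Hm : gfun c * `|u| <= nrm x.
  move: Hv; rewrite /gfun phiZ nrmZ cabs_real ger0_norm ?invr_ge0 // /u phi_psi.
  by move=> H; rewrite -ler_pdivlMr ?normr_gt0 // mulrC.
rewrite -{1}(phi_psi x) -/u (le_trans (cabs_phi_le _ _)) //.
rewrite mulrAC ler_pdivlMr // -mulrA ler_wpM2l // mulrC; exact: Hm.
Qed.

Lemma cabs_sum (I : finType) (P : pred I) (F : I -> C) :
  cabs (\sum_(k | P k) F k) <= \sum_(k | P k) cabs (F k).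
Proof.
apply: (big_ind2 (fun a b => cabs a <= b)); first by rewrite cabs0.
  by move=> a a' b b' h1 h2; rewrite (le_trans (cabsD _ _ _)) // lerD.
by [].
Qed.

Lemma opnorm_bound (A : 'M[C]_d) : exists K : R, forall x, nrm (A *m x) <= K * nrm x.
Proof.
have [c c0 Hc] := norm_lower.
exists (\sum_(k < d) (\sum_(l < d) cabs (A k l) * c) * nrm (delta_mx k 0 : 'cV[C]_d)) => x.
rewrite (le_trans (nrm_upper _)) // mulr_suml ler_sum // => k _.
rewrite mulrAC ler_wpM2r ?nrm_ge0 // mxE (le_trans (cabs_sum _ _ _)) //.
rewrite mulr_suml ler_sum // => l _.
by rewrite cabsM -mulrA ler_wpM2l ?cabs_ge0.
Qed.

Lemma opnorm_ge (A : 'M[C]_d) (x : 'cV[C]_d) : x != 0 -> nrm (A *m x) / nrm x <= opnorm nrm A.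
Proof.
move=> x0.
have [K HK] := opnorm_bound A.
apply: sup_upper_bound; last by exists x.
split; first by exists (nrm (A *m x) / nrm x), x.
exists K => r [y [y0 ->]].
have ny : 0 < nrm y.
  rewrite lt_def nrm_ge0 andbT; apply: contra y0 => /eqP /nrm_eq0 ->; exact: eqxx.
by rewrite ler_pdivrMr.
Qed.

Lemma opnorm_eig (A : 'M[C]_d) (x : 'cV[C]_d) (a : C) : x != 0 -> A *m x = a *: x -> cabs a <= opnorm nrm A.
Proof.
move=> x0 Ax; have := opnorm_ge A x x0; rewrite Ax nrmZ mulfK //.
apply: contra x0 => /eqP /nrm_eq0 ->; exact: eqxx.
Qed.
End Norm.


Lemma sum_cvg0 (R : realType) (I : Type) (r : seq I) (P : pred I) (f : I -> nat -> R) :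
  (forall j, P j -> f j @ \oo --> (0:R)) ->
  (fun t => \sum_(j <- r | P j) f j t) @ \oo --> (0:R).
Proof.
move=> H; elim: r => [|a r IH].
  under eq_fun do rewrite big_nil.
  exact: cvg_cst.
under eq_fun do rewrite big_cons.
case: (boolP (P a)) => Pa.
  have HH := cvgD (H a Pa) IH; rewrite addr0 in HH; exact: HH.
exact: IH.
Qed.

Section Alg.
Variable R : realType.
Local Notation C := (complex R).
Variable n : nat.
Variable d : 'I_n -> nat.
Variable L : forall i : 'I_n, 'M[C]_(d i).
Variable Cm : forall i : 'I_n, 'M[C]_(d i, d (predix i)).
Variable V : forall i : 'I_n, 'M[C]_(d i).
Variable lam : forall i : 'I_n, 'I_(d i) -> C.
Local Notation DD := (D L Cm V lam).

Lemma predix_val (i : 'I_n) : (predix i : nat) = i.-1.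
Proof. by []. Qed.

Lemma idlike_id (i : 'I_n) : @idlike R n d i i = 1%:M.
Proof. by apply/matrixP => a b; rewrite !mxE. Qed.

Lemma D_diag (i : 'I_n) : DD i i = 1%:M.
Proof.
rewrite /D; case: i => [[|k] Hk] /=; first exact: idlike_id.
by rewrite ltnn idlike_id.
Qed.

Lemma D_unfold (i j : 'I_n) : (j < i)%N ->
  DD i j = invmx (L i) *m V i *m
    (\matrix_(l, m) ((invmx (V i) *m Cm i *m DD (predix i) j *m V j) l m
       * (1 - lam j m / lam i l)^-1)) *m invmx (V j).
Proof.
rewrite /D; case: i => [[|k] Hk] //= ->.
reflexivity.
Qed.

Hypothesis HLu : forall i, L i \in unitmx.
Hypothesis HVu : forall i, V i \in unitmx.
Hypothesis HLV : forall i, L i *m V i = V i *m diag_mx (\row_s lam i s).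
Hypothesis Hspec : forall (i j : 'I_n) (a : C), i != j ->
  ~ (eigenvalue (L i) a /\ eigenvalue (L j) a).

Lemma VinvL i : invmx (V i) *m L i = diag_mx (\row_s lam i s) *m invmx (V i).
Proof.
rewrite -[LHS]mulmx1 -(mulmxV (HVu i)) mulmxA -(mulmxA (invmx (V i)) (L i)).
by rewrite HLV mulmxA mulVmx // mul1mx.
Qed.

Lemma row_invV_neq0 i l : row l (invmx (V i)) != 0.
Proof.
apply/eqP => H.
have : row l (invmx (V i) *m V i) = 0 by rewrite row_mul H mul0mx.
rewrite mulVmx // => /rowP /(_ l); rewrite !mxE eqxx /= => /eqP.
by rewrite oner_eq0.
Qed.

Lemma row_invV_eig i l :
  row l (invmx (V i)) *m L i = lam i l *: row l (invmx (V i)).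
Proof.
rewrite -row_mul VinvL mul_diag_mx; apply/rowP => m; rewrite !mxE.
by [].
Qed.

Lemma lam_eigen i l : eigenvalue (L i) (lam i l).
Proof.
apply/eigenvalueP; exists (row l (invmx (V i))).
  exact: row_invV_eig.
exact: row_invV_neq0.
Qed.

Lemma lam_neq0 i l : lam i l != 0.
Proof.
apply/eqP => H; case/eqP: (row_invV_neq0 i l).
have := row_invV_eig i l; rewrite H scale0r => H2.
by rewrite -[row _ _]mulmx1 -(mulmxV (HLu i)) mulmxA H2 mul0mx.
Qed.

Lemma lam_diff (i j : 'I_n) l m : i != j -> lam j m != lam i l.
Proof.
move=> ij; apply/eqP => E; apply: (Hspec i j (lam i l) ij); split.
  exact: lam_eigen.
rewrite -E; exact: lam_eigen.
Qed.

Lemma one_sub_neq0 (i j : 'I_n) l m : i != j -> 1 - lam j m / lam i l != 0.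
Proof.
move=> ij; rewrite subr_eq0; apply/eqP => E.
have := lam_diff i j l m ij; rewrite -[lam j m](@divfK _ (lam i l)) ?lam_neq0 //.
by rewrite -E mul1r eqxx.
Qed.

Lemma sandwich (i j : 'I_n) (A : 'M[C]_(d i, d j)) :
  A = V i *m (invmx (V i) *m A *m V j) *m invmx (V j).
Proof.
by rewrite !mulmxA mulmxV // mul1mx -mulmxA mulmxV // mulmx1.
Qed.

Lemma sylvester (i j : 'I_n) : (j < i)%N ->
  L i *m DD i j - DD i j *m L j = Cm i *m DD (predix i) j.
Proof.
move=> ji.
have ij : i != j by rewrite neq_ltn ji orbT.
set M := invmx (V i) *m Cm i *m DD (predix i) j *m V j.
set Ct := \matrix_(l, m) (M l m * (1 - lam j m / lam i l)^-1).
have DE : DD i j = invmx (L i) *m V i *m Ct *m invmx (V j) by rewrite D_unfold.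
set Y := invmx (V i) *m DD i j *m V j.
have HY : diag_mx (\row_s lam i s) *m Y = Ct.
  rewrite /Y DE !mulmxA -VinvL -(mulmxA (invmx (V i)) (L i)) mulmxV // mulmx1.
  by rewrite mulVmx // mul1mx -mulmxA mulVmx // mulmx1.
have HM : invmx (V i) *m (L i *m DD i j - DD i j *m L j) *m V j = M.
  have E1 : invmx (V i) *m (L i *m DD i j) *m V j = diag_mx (\row_s lam i s) *m Y.
    by rewrite /Y !mulmxA VinvL.
  have E2 : invmx (V i) *m (DD i j *m L j) *m V j = Y *m diag_mx (\row_s lam j s).
    by rewrite /Y -!mulmxA HLV.
  rewrite mulmxBr mulmxBl E1 E2; apply/matrixP => l m.
  have HYlm : (diag_mx (\row_s lam i s) *m Y) l m = Ct l m by rewrite HY.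
  move: HYlm; rewrite mul_diag_mx mul_mx_diag !mxE => HYlm.
  have h1 := one_sub_neq0 i j l m ij; have h2 := lam_neq0 i l.
  rewrite -[RHS](divfK h1) -HYlm; field; exact: h2.
rewrite (sandwich i j (L i *m DD i j - DD i j *m L j)) HM /M.
by rewrite !mulmxA mulmxV // mul1mx -!mulmxA mulmxV // mulmx1.
Qed.

Local Notation pert := (pert L Cm V lam).
Local Notation pertfuel := (pertfuel L Cm V lam).

Lemma pertfuel_stable x : forall k (i : 'I_n), (i <= k)%N -> pertfuel k x i = pert x i.
Proof.
elim/ltn_ind => k IH i.
case: k IH => [|k] IH.
  by case: i => [[|m] Hm] // _.
case: i => [[|m] Hm] /= Hle.
  by rewrite /pert /= big_pred0 ?addr0 // => j; rewrite ltn0.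
rewrite /pert /=; congr (_ + _); apply: eq_bigr => j Hj.
have jm : (j <= m)%N by [].
have mk : (m <= k)%N by [].
rewrite (IH k) ?(IH m) //; by [rewrite ltnS | apply: leq_trans mk].
Qed.

Lemma pert_rec x (i : 'I_n) : pert x i =
  x i + \sum_(j < n | (j < i)%N) (-1) ^+ (i.-1 - j) *: (DD i j *m pert x j).
Proof.
case: i => [[|m] Hm].
  by rewrite /pert /= big_pred0 ?addr0 // => j; rewrite ltn0.
rewrite {1}/pert /=; congr (_ + _); apply: eq_bigr => j Hj.
by rewrite pertfuel_stable.
Qed.

Lemma sum_Dk x (i : 'I_n) : (0 < i)%N ->
  \sum_(j < n | (j < i)%N) (-1) ^+ (i.-1 - j) *: (DD (predix i) j *m pert x j)
  = x (predix i).
Proof.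
move=> i0.
have ki : (predix i < i)%N by rewrite predix_val ltn_predL.
rewrite (bigD1 (predix i)) //= subnn expr0 scale1r D_diag mul1mx.
rewrite (pert_rec x (predix i)) -addrA.
rewrite -[RHS]addr0; congr (_ + _).
have HP : forall j : 'I_n, ((j < i)%N && (j != predix i)) = (j < predix i)%N.
  move=> j; rewrite -val_eqE /=.
  apply/idP/idP => [/andP[H1 /eqP H2]|H]; first lia.
  apply/andP; split; [lia | apply/eqP; lia].
rewrite (eq_bigl _ _ HP) -big_split /= big1 // => j jk.
have E : (i.-1 - j = ((predix i).-1 - j).+1)%N.
  by move: jk; rewrite /=; lia.
by rewrite E exprS mulN1r scaleNr subrr.
Qed.

Lemma pert_lin_step x (i : 'I_n) :
  (forall j : 'I_n, (j < i)%N -> pert (Lin L Cm x) j = L j *m pert x j) ->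
  pert (Lin L Cm x) i = L i *m pert x i.
Proof.
move=> IH.
rewrite pert_rec (pert_rec x i).
under eq_bigr => j Hj do rewrite IH //.
rewrite mulmxDr /Lin -addrA; congr (_ + _).
rewrite mulmx_sumr.
apply/eqP; rewrite eq_sym -subr_eq; apply/eqP.
rewrite -sumrB.
rewrite (eq_bigr (fun j : 'I_n => Cm i *m ((-1) ^+ (i.-1 - j) *: (DD (predix i) j *m pert x j)))); last first.
  move=> j Hj.
  rewrite -scalemxAr -scalerBr !mulmxA -mulmxBl sylvester //.
  by rewrite -scalemxAr mulmxA.
rewrite -mulmx_sumr.
case: (posnP i) => [i0|i0].
  by rewrite i0 /= big_pred0 ?mulmx0 // => j; rewrite ltn0.
by rewrite sum_Dk.
Qed.

Lemma pert_lin x (i : 'I_n) : pert (Lin L Cm x) i = L i *m pert x i.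
Proof.
suff H : forall k (i : 'I_n), (i <= k)%N -> pert (Lin L Cm x) i = L i *m pert x i.
  exact: (H i).
elim=> [|k IH] j Hj; apply: pert_lin_step => l Hl.
  by move: (leq_trans Hl Hj).
by apply: IH; rewrite -ltnS (leq_trans Hl Hj).
Qed.

Lemma iter_Nom_eig t z (j : 'I_n) m :
  (invmx (V j) *m iter t (Nom L) z j) m 0 = lam j m ^+ t * (invmx (V j) *m z j) m 0.
Proof.
elim: t => [|t IH]; first by rewrite expr0 mul1r.
rewrite iterS /Nom mulmxA VinvL -mulmxA mul_diag_mx mxE IH mxE.
by rewrite exprS mulrA.
Qed.

Lemma pert_iter t x (j : 'I_n) : pert (iter t (Lin L Cm) x) j = iter t (Nom L) (pert x) j.
Proof.
elim: t j => [|t IH] j //.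
by rewrite iterS pert_lin IH.
Qed.

Lemma entryB p q (A B : 'M[C]_(p, q)) k l : (A - B) k l = A k l - B k l.
Proof. by rewrite !mxE. Qed.

Lemma entryN p q (A : 'M[C]_(p, q)) k l : (- A) k l = - A k l.
Proof. by rewrite !mxE. Qed.

Lemma entryZ p q a (A : 'M[C]_(p, q)) k l : (a *: A) k l = a * A k l.
Proof. by rewrite !mxE. Qed.

Lemma diff_formula t x (i : 'I_n) (s : 'I_(d i)) :
  Psi V s (iter t (Lin L Cm) x) - Psi V s (iter t (Nom L) (pert x)) =
  - \sum_(j < n | (j < i)%N) (-1) ^+ (i.-1 - j) *
      \sum_(m < d j) (invmx (V i) *m DD i j *m V j) s m *
        (lam j m ^+ t * (invmx (V j) *m pert x j) m 0).
Proof.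
have Hw := pert_rec (iter t (Lin L Cm) x) i.
rewrite pert_iter in Hw.
rewrite (eq_bigr (fun j : 'I_n => (-1) ^+ (i.-1 - j) *: (DD i j *m iter t (Nom L) (pert x) j))) in Hw; last by move=> j _; rewrite pert_iter.
set w := iter t (Lin L Cm) x in Hw *; set z := iter t (Nom L) (pert x) in Hw *.
have Ew : w i = z i - \sum_(j < n | (j < i)%N) (-1) ^+ (i.-1 - j) *: (DD i j *m z j).
  by rewrite Hw addrK.
rewrite /Psi -entryB -mulmxBr Ew addrC addKr mulmxN.
rewrite mulmx_sumr entryN summxE; congr (- _); apply: eq_bigr => j _.
rewrite -scalemxAr entryZ; congr (_ * _).
have -> : invmx (V i) *m (DD i j *m z j) =
    (invmx (V i) *m DD i j *m V j) *m (invmx (V j) *m z j).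
  by rewrite -!mulmxA mulKVmx.
rewrite mxE; apply: eq_bigr => m _.
by rewrite /z iter_Nom_eig.
Qed.

Lemma cabs1 : cabs (1 : C) = 1.
Proof. exact: ComplexField.Normc.normc1. Qed.

Lemma cabsX (a : C) k : cabs (a ^+ k) = cabs a ^+ k.
Proof. by elim: k => [|k IH]; rewrite ?expr0 ?cabs1 // !exprS cabsM IH. Qed.

Lemma cabs_sign k : cabs ((-1 : C) ^+ k) = 1.
Proof. by rewrite cabsX cabsN cabs1 expr1n. Qed.

Variable nrm : forall i : 'I_n, 'cV[C]_(d i) -> R.
Hypothesis Hnrm : forall i, is_norm (nrm i).
Hypothesis Hd : forall i, (0 < d i)%N.
Hypothesis Hlt : forall i j : 'I_n, (i < j)%N -> opnorm (nrm i) (L i) < opnorm (nrm j) (L j).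

Lemma col_V_neq0 (j : 'I_n) m : col m (V j) != 0.
Proof.
apply/eqP => H.
have : col m (invmx (V j) *m V j) = 0 by rewrite colE -mulmxA -colE H mulmx0.
rewrite mulVmx // => /colP /(_ m); rewrite !mxE eqxx /= => /eqP.
by rewrite oner_eq0.
Qed.

Lemma lam_le_opnorm (j : 'I_n) m : cabs (lam j m) <= opnorm (nrm j) (L j).
Proof.
apply: (opnorm_eig R (d j) (nrm j) (Hnrm j) (L j) (col m (V j)) (lam j m)).
  exact: col_V_neq0.
apply/matrixP => k z; rewrite (ord1 z).
have E : (L j *m V j) k m = (V j *m diag_mx (\row_s lam j s)) k m by rewrite HLV.
move: E; rewrite mul_mx_diag !mxE => E.
rewrite -[RHS]mulrC -E; apply: eq_bigr => l _; rewrite !mxE.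
by [].
Qed.
Lemma main_cvg x (i : 'I_n) (s : 'I_(d i)) :
  (fun t : nat => cabs (Psi V s (iter t (Lin L Cm) x) - Psi V s (iter t (Nom L) (pert x)))
       / opnorm (nrm i) (L i) ^+ t) @ \oo --> (0 : R).
Proof.
set rho := opnorm (nrm i) (L i).
have rho0 : 0 <= rho := le_trans (cabs_ge0 _ _) (lam_le_opnorm i (Ordinal (Hd i))).
pose G t := \sum_(j < n | (j < i)%N) \sum_(m < d j)
   cabs ((invmx (V i) *m DD i j *m V j) s m) * cabs ((invmx (V j) *m pert x j) m 0)
     * (cabs (lam j m) / rho) ^+ t.
apply: (@squeeze_cvgr _ _ _ _ (fun=> 0) G).
- near=> t; apply/andP; split.
    by rewrite divr_ge0 ?cabs_ge0 ?exprn_ge0.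
  have -> : G t = (\sum_(j < n | (j < i)%N) \sum_(m < d j)
      cabs ((invmx (V i) *m DD i j *m V j) s m) * cabs ((invmx (V j) *m pert x j) m 0)
        * cabs (lam j m) ^+ t) / rho ^+ t.
    rewrite mulr_suml; apply: eq_bigr => j _; rewrite mulr_suml; apply: eq_bigr => m _.
    by rewrite expr_div_n mulrA.
  apply: ler_wpM2r; first by rewrite invr_ge0 exprn_ge0.
  rewrite diff_formula cabsN (le_trans (cabs_sum _ _ _ _)) // ler_sum // => j _.
  rewrite cabsM cabs_sign mul1r (le_trans (cabs_sum _ _ _ _)) // ler_sum // => m _.
  by rewrite !cabsM cabsX [cabs (lam j m) ^+ t * _]mulrC mulrA.
- exact: cvg_cst.
- apply: sum_cvg0 => j ji; apply: sum_cvg0 => m _.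
  set K := cabs ((invmx (V i) *m DD i j *m V j) s m) * cabs ((invmx (V j) *m pert x j) m 0).
  have Hq : (fun t : nat => (cabs (lam j m) / rho) ^+ t) @ \oo --> (0:R).
    apply: cvg_expr.
    have lt1 : cabs (lam j m) < rho := le_lt_trans (lam_le_opnorm j m) (Hlt j i ji).
    have rp : 0 < rho := le_lt_trans (cabs_ge0 _ _) lt1.
    by rewrite ger0_norm ?divr_ge0 ?cabs_ge0 // ltr_pdivrMr // mul1r.
  have HH : (fun t : nat => K * (cabs (lam j m) / rho) ^+ t) @ \oo --> K * 0.
    exact: cvgMl_tmp.
  by rewrite mulr0 in HH.
Unshelve. all: by end_near.
Qed.
End Alg.


Theorem theorem4 (R : realType) (n : nat) (d : 'I_n -> nat)
  (nrm : forall i : 'I_n, 'cV[complex R]_(d i) -> R)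
  (L : forall i : 'I_n, 'M[complex R]_(d i))
  (Cm : forall i : 'I_n, 'M[complex R]_(d i, d (predix i)))
  (V : forall i : 'I_n, 'M[complex R]_(d i))
  (lam : forall i : 'I_n, 'I_(d i) -> complex R)
  (N : forall i : 'I_n, 'cV[complex R]_(d (predix i)) -> 'cV[complex R]_(d i) -> 'cV[complex R]_(d i))
  (tau tauinv : @state R n d -> @state R n d) :
  (0 < n)%N ->
  (forall i, 0 < d i)%N ->
  (forall i, is_norm (nrm i)) ->
  (* (i) *)
  (forall i, L i \in unitmx) ->
  (forall i, V i \in unitmx) ->
  (forall i, L i *m V i = V i *m diag_mx (\row_s lam i s)) ->
  (* (ii) *)
  (forall (i j : 'I_n) (a : complex R), i != j -> ~ (eigenvalue (L i) a /\ eigenvalue (L j) a)) ->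
  (* (iii) *)
  (forall i j : 'I_n, (i < j)%N -> opnorm (nrm i) (L i) < opnorm (nrm j) (L j)) ->
  (forall i : 'I_n, opnorm (nrm i) (L i) <= 1) ->
  (* tau homeomorphism conjugating NonLin to Lin *)
  is_homeomorphism nrm tau tauinv ->
  (forall x, Lin L Cm x = tauinv (NonLin L Cm N (tau x))) ->
  forall (i : 'I_n) (s : 'I_(d i)) (y : @state R n d),
    (fun t : nat =>
       cabs (Psi V s (tauinv (iter t (NonLin L Cm N) y))
             - Psi V s (tauinv (iter t (tau \o Nom L \o tauinv)
                                  ((tau \o pert L Cm V lam \o tauinv) y))))
       / opnorm (nrm i) (L i) ^+ t) @ \oo --> (0 : R).
Proof.
move=> Hn0 Hd Hnrm HLu HVu HLV Hspec Hlt Hle1 [c1 c2 _ _] Hconj i s y.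
have E1 : forall t, tauinv (iter t (NonLin L Cm N) y) = iter t (Lin L Cm) (tauinv y).
  elim=> [|t IH] //=.
  by rewrite -IH Hconj c2.
have E2 : forall t z, iter t (tau \o Nom L \o tauinv) (tau z) = tau (iter t (Nom L) z).
  by move=> t z; elim: t => [|t IH] //=; rewrite IH c1.
have -> : (fun t : nat =>
       cabs (Psi V s (tauinv (iter t (NonLin L Cm N) y))
             - Psi V s (tauinv (iter t (tau \o Nom L \o tauinv)
                                  ((tau \o pert L Cm V lam \o tauinv) y))))
       / opnorm (nrm i) (L i) ^+ t) =
    (fun t : nat => cabs (Psi V s (iter t (Lin L Cm) (tauinv y))
        - Psi V s (iter t (Nom L) (pert L Cm V lam (tauinv y)))) / opnorm (nrm i) (L i) ^+ t).
  by apply: funext => t /=; rewrite E1 E2 c1.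
exact: (main_cvg R n d L Cm V lam HLu HVu HLV Hspec nrm Hnrm Hd Hlt).
Qed.
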